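(* Let $G=([n],E)$ be any graph and let $C$ be a cycle in $G$ with an odd number $|C|$ of vertices (identify $C$ with its vertex set). Then the polynomial $\frac{|C|-1}{2}-\sum_{i\in C}x_i$ is $2$-sos modulo $I_G$; consequently the odd cycle inequality $\sum_{i\in C}x_i\le\frac{|C|-1}{2}$ is valid on $\mathrm{TH}_2(I_G)$.
   Context: For a graph $G=([n],E)$, $I_G\subseteq\mathbb R[x_1,\dots,x_n]$ is the ideal generated by $x_i^2-x_i$ for all $i\in[n]$ and $x_ix_j$ for all $\{i,j\}\in E$ (it is the vanishing ideal of the set of characteristic vectors of stable sets of $G$). $\mathbb{R}[\mathbf x]_k$ denotes the polynomials of degree at most $k$. A polynomial $h$ is $k$-sos modulo $I$ if there are $g_1,\dots,g_r\in\mathbb{R}[\mathbf x]_k$ with $h-\sum_i g_i^2\in I$. The $k$-th theta body is $\mathrm{TH}_k(I)=\{p\in\mathbb R^n: l(p)\ge 0$ for every $l\in\mathbb{R}[\mathbf x]_1$ that is $k$-sos modulo $I\}$. *)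

(* Defs.v *)
(* Multivariate polynomials are not available in the installed
   libraries, so real polynomials in n variables are modelled as polynomial
   functions R^n -> R (points are functions 'I_n -> R); over an infinite field
   (here any realFieldType, e.g. the reals) polynomials and polynomial
   functions correspond bijectively. *)
From HB Require Import structures.
From mathcomp Require Import all_boot all_order all_algebra.
Set Implicit Arguments. Unset Strict Implicit. Unset Printing Implicit Defensive.
Import Order.TTheory GRing.Theory Num.Theory.
Local Open Scope ring_scope.

Definition is_poly_deg (R : realFieldType) (n k : nat) (f : ('I_n -> R) -> R) : Prop :=
  exists s : seq (R * ('I_n -> nat)),
    all (fun t => (\sum_(i < n) t.2 i <= k)%N) s /\
    forall x : 'I_n -> R, f x = \sum_(t <- s) t.1 * \prod_(i < n) x i ^+ t.2 i.

Definition is_poly (R : realFieldType) (n : nat) (f : ('I_n -> R) -> R) : Prop :=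
  exists k, is_poly_deg k f.

Definition in_IG (R : realFieldType) (n : nat) (e : rel 'I_n) (h : ('I_n -> R) -> R) : Prop :=
  exists (a : 'I_n -> ('I_n -> R) -> R) (b : 'I_n -> 'I_n -> ('I_n -> R) -> R),
    (forall j, is_poly (a j)) /\ (forall i j, is_poly (b i j)) /\
    forall x : 'I_n -> R,
      h x = \sum_(j < n) a j x * (x j ^+ 2 - x j)
          + \sum_(i < n) \sum_(j < n | e i j) b i j x * (x i * x j).

Definition sos_mod (R : realFieldType) (n : nat) (k : nat) (e : rel 'I_n)
    (h : ('I_n -> R) -> R) : Prop :=
  exists (r : nat) (g : 'I_r -> ('I_n -> R) -> R),
    (forall l, is_poly_deg k (g l)) /\
    in_IG e (fun x => h x - \sum_(l < r) (g l x) ^+ 2).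

Definition TH (R : realFieldType) (n : nat) (k : nat) (e : rel 'I_n) (p : 'I_n -> R) : Prop :=
  forall l : ('I_n -> R) -> R, is_poly_deg 1 l -> sos_mod k e l -> 0 <= l p.

Definition graph_cycle (n : nat) (e : rel 'I_n) (c : seq 'I_n) : Prop :=
  [/\ (3 <= size c)%N, uniq c & cycle e c].

(* Main.v *)
Require Import Defs.
From HB Require Import structures.
From mathcomp Require Import all_boot all_order all_algebra.
From Stdlib Require Import Ring.
Set Implicit Arguments. Unset Strict Implicit. Unset Printing Implicit Defensive.
Import Order.TTheory GRing.Theory Num.Theory.
Local Open Scope ring_scope.
Section Polys.
Variables (R : realFieldType) (n : nat).
Local Notation P := (('I_n -> R) -> R).

Lemma deg_ext k (f g : P) : (forall x, f x = g x) -> is_poly_deg k f -> is_poly_deg k g.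
Proof. move=> fg [s [H1 H2]]; exists s; split=> // x; by rewrite -fg. Qed.

Lemma deg_weak k k' (f : P) : (k <= k')%N -> is_poly_deg k f -> is_poly_deg k' f.
Proof.
move=> kk [s [H1 H2]]; exists s; split=> //.
apply: sub_all H1 => t /= H; exact: leq_trans H kk.
Qed.

Lemma deg_const k (a : R) : is_poly_deg k (fun _ : 'I_n -> R => a).
Proof.
exists [:: (a, fun _ => 0%N)]; split; first by rewrite /= big1.
by move=> x; rewrite big_seq1 /= big1 ?mulr1.
Qed.

Lemma deg_var k (i : 'I_n) : (1 <= k)%N -> is_poly_deg k (fun x : 'I_n -> R => x i).
Proof.
move=> k1; exists [:: (1, fun j => nat_of_bool (j == i))]; split.
  rewrite /= andbT (bigD1 i) //= eqxx big1 ?addn0 // => j /negbTE ->//.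
move=> x; rewrite big_seq1 /= mul1r (bigD1 i) //= eqxx big1 ?mulr1 //.
by move=> j /negbTE ->.
Qed.

Lemma deg_add k (f g : P) : is_poly_deg k f -> is_poly_deg k g ->
  is_poly_deg k (fun x => f x + g x).
Proof.
move=> [s [H1 H2]] [t [H3 H4]]; exists (s ++ t); split.
  by rewrite all_cat H1 H3.
by move=> x; rewrite big_cat /= H2 H4.
Qed.

Lemma deg_scale k (a : R) (f : P) : is_poly_deg k f -> is_poly_deg k (fun x => a * f x).
Proof.
move=> [s [H1 H2]]; exists [seq (a * t.1, t.2) | t <- s]; split.
  by rewrite all_map.
by move=> x; rewrite H2 big_map mulr_sumr; apply: eq_bigr => t _; rewrite mulrA.
Qed.

Lemma deg_monmul k1 k2 (a : R) (m : 'I_n -> nat) (g : P) :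
  (\sum_(i < n) m i <= k1)%N -> is_poly_deg k2 g ->
  is_poly_deg (k1 + k2) (fun x => a * \prod_(i < n) x i ^+ m i * g x).
Proof.
move=> Hm [t [H3 H4]].
exists [seq (a * v.1, fun i => (m i + v.2 i)%N) | v <- t]; split.
  rewrite all_map; apply: sub_all H3 => v /= Hv.
  by rewrite big_split /= leq_add.
move=> x; rewrite H4 big_map mulr_sumr; apply: eq_bigr => v _ /=.
under [in RHS]eq_bigr do rewrite exprD.
rewrite big_split /=.
by rewrite -!mulrA; congr (_ * _); rewrite mulrCA.
Qed.

Lemma deg_mul k1 k2 (f g : P) : is_poly_deg k1 f -> is_poly_deg k2 g ->
  is_poly_deg (k1 + k2) (fun x => f x * g x).
Proof.
move=> [s [H1 H2]] Hg.
apply: (@deg_ext _ (fun x => (\sum_(t <- s) t.1 * \prod_(i < n) x i ^+ t.2 i) * g x)).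
  by move=> x; rewrite H2.
elim: s H1 {H2} => [|t s IH] /=.
  by move=> _; apply: deg_ext (deg_const _ 0) => x; rewrite big_nil mul0r.
move=> /andP [Ht Hs].
apply: deg_ext (deg_add (deg_monmul t.1 Ht Hg) (IH Hs)) => x.
by rewrite big_cons mulrDl.
Qed.

Lemma deg_sum k (I : Type) (s : seq I) (F : I -> P) :
  (forall i, is_poly_deg k (F i)) -> is_poly_deg k (fun x => \sum_(i <- s) F i x).
Proof.
move=> H; elim: s => [|a s IH].
  by apply: deg_ext (deg_const k 0) => x; rewrite big_nil.
by apply: deg_ext (deg_add (H a) IH) => x; rewrite big_cons.
Qed.

End Polys.

Section Ideal.
Variables (R : realFieldType) (n : nat) (e : rel 'I_n).
Local Notation P := (('I_n -> R) -> R).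

Lemma RT : @ring_theory (Algebra.BaseAddMagma.sort (Num_RealField__to__Algebra_BaseAddMagma R)) 0 1 +%R *%R (fun x y => x - y) -%R (@eq (Algebra.BaseAddMagma.sort (Num_RealField__to__Algebra_BaseAddMagma R))).
Proof.
split=> //; [exact: add0r|exact: addrC|exact: addrA|exact: mul1r|exact: mulrC|exact: mulrA|exact: mulrDl|exact: subrr].
Qed.
Add Ring Rr : RT.
Ltac canon :=
  apply: (@addrI _ 0); rewrite ?expr2;
  repeat match goal with
  | |- context [@Algebra.add ?s] => lazymatch s with Num_RealField__to__Algebra_BaseAddMagma R => fail | _ => change (@Algebra.add s) with (@Algebra.add (Num_RealField__to__Algebra_BaseAddMagma R)) end
  | |- context [@Algebra.opp ?s] => lazymatch s with Num_RealField__to__Algebra_BaseZmodule R => fail | _ => change (@Algebra.opp s) with (@Algebra.opp (Num_RealField__to__Algebra_BaseZmodule R)) end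
  | |- context [@GRing.mul ?s] => lazymatch s with Num_RealField__to__GRing_PzSemiRing R => fail | _ => change (@GRing.mul s) with (@GRing.mul (Num_RealField__to__GRing_PzSemiRing R)) end
  | |- context [@GRing.one ?s] => lazymatch s with Num_RealField__to__GRing_PzSemiRing R => fail | _ => change (@GRing.one s) with (@GRing.one (Num_RealField__to__GRing_PzSemiRing R)) end
  | |- context [@Algebra.natmul ?s] => lazymatch s with Num_RealField__to__Algebra_BaseAddUMagma R => fail | _ => change (@Algebra.natmul s) with (@Algebra.natmul (Num_RealField__to__Algebra_BaseAddUMagma R)) end
  | |- context [@Algebra.zero ?s] => lazymatch s with Num_RealField__to__Algebra_BaseAddUMagma R => fail | _ => change (@Algebra.zero s) with (@Algebra.zero (Num_RealField__to__Algebra_BaseAddUMagma R)) end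
  end;
  match goal with |- @eq _ ?a ?b => change (@eq (Algebra.BaseAddMagma.sort (Num_RealField__to__Algebra_BaseAddMagma R)) a b) end.
Ltac rg := canon; ring.

Lemma poly_deg k (f : P) : is_poly_deg k f -> is_poly f.
Proof. by exists k. Qed.

Lemma pconst (a : R) : is_poly (fun _ : 'I_n -> R => a).
Proof. by exists 0%N; apply: deg_const. Qed.

Lemma pmul (f g : P) : is_poly f -> is_poly g -> is_poly (fun x => f x * g x).
Proof. move=> [k1 H1] [k2 H2]; exact: poly_deg (deg_mul H1 H2). Qed.

Lemma padd (f g : P) : is_poly f -> is_poly g -> is_poly (fun x => f x + g x).
Proof.
move=> [k1 H1] [k2 H2]; apply: (poly_deg (k := maxn k1 k2)).
apply: deg_add.
  by apply: deg_weak H1; rewrite leq_maxl.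
by apply: deg_weak H2; rewrite leq_maxr.
Qed.

Lemma IG_ext (f g : P) : (forall x, f x = g x) -> in_IG e f -> in_IG e g.
Proof. move=> fg [a [b [Ha [Hb H]]]]; exists a, b; do 2!split=> //; move=> x; by rewrite -fg. Qed.

Lemma IG0 : in_IG e (fun _ : 'I_n -> R => 0).
Proof.
exists (fun _ _ => 0), (fun _ _ _ => 0); split; [|split] => //.
- by move=> ?; apply: pconst.
- by move=> ? ?; apply: pconst.
move=> x; rewrite big1 ?add0r ?big1 // => i _; first by rewrite big1 // => j _; rewrite mul0r.
by rewrite mul0r.
Qed.

Lemma IG_add (f g : P) : in_IG e f -> in_IG e g -> in_IG e (fun x => f x + g x).
Proof.
move=> [a1 [b1 [Ha1 [Hb1 H1]]]] [a2 [b2 [Ha2 [Hb2 H2]]]].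
exists (fun j x => a1 j x + a2 j x), (fun i j x => b1 i j x + b2 i j x).
split; [|split].
- by move=> j; apply: padd.
- by move=> i j; apply: padd.
move=> x; rewrite H1 H2; symmetry.
under eq_bigr do rewrite mulrDl.
rewrite big_split /=.
under [X in _ + X = _]eq_bigr => i _ do (under eq_bigr do rewrite mulrDl; rewrite big_split /=).
rewrite big_split /=.
by rewrite addrACA.
Qed.

Lemma IG_mul (p h : P) : is_poly p -> in_IG e h -> in_IG e (fun x => p x * h x).
Proof.
move=> Hp [a [b [Ha [Hb H]]]].
exists (fun j x => p x * a j x), (fun i j x => p x * b i j x).
split; [|split].
- by move=> j; apply: pmul.
- by move=> i j; apply: pmul.
move=> x; rewrite H mulrDr !mulr_sumr; congr (_ + _).
  by apply: eq_bigr => j _; rewrite mulrA.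
apply: eq_bigr => i _; rewrite mulr_sumr; apply: eq_bigr => j _; by rewrite mulrA.
Qed.

Lemma IG_sq (j : 'I_n) : in_IG e (fun x : 'I_n -> R => x j ^+ 2 - x j).
Proof.
exists (fun j' (_ : 'I_n -> R) => (j' == j)%:R), (fun _ _ (_ : 'I_n -> R) => 0); split; [|split].
- by move=> ?; apply: pconst.
- by move=> ? ?; apply: pconst.
move=> x; rewrite [X in _ = _ + X]big1; last first.
  by move=> i _; rewrite big1 // => k _; rewrite mul0r.
rewrite addr0 (bigD1 j) //= eqxx mul1r big1 ?addr0 // => k /negbTE ->.
by rewrite mul0r.
Qed.

Lemma IG_edge (i j : 'I_n) : e i j -> in_IG e (fun x : 'I_n -> R => x i * x j).
Proof.
move=> eij.
exists (fun _ (_ : 'I_n -> R) => 0), (fun i' j' (_ : 'I_n -> R) => ((i' == i) && (j' == j))%:R); split; [|split].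
- by move=> ?; apply: pconst.
- by move=> ? ?; apply: pconst.
move=> x; rewrite big1 ?add0r; last by move=> k _; rewrite mul0r.
rewrite (bigD1 i) //= [X in _ = _ + X]big1 ?addr0; last first.
  by move=> k /negbTE kn; rewrite big1 // => l _; rewrite kn /= mul0r.
rewrite (bigD1 j) //= !eqxx mul1r big1 ?addr0 // => l /andP [_ /negbTE ->].
by rewrite andbF mul0r.
Qed.

Definition cong (f g : P) := in_IG e (fun x => f x - g x).

Lemma IG_scale (a : R) (h : P) : in_IG e h -> in_IG e (fun x => a * h x).
Proof. by apply: IG_mul; apply: pconst. Qed.


Lemma cong_ext (f g f' g' : P) : (forall x, f x = f' x) -> (forall x, g x = g' x) ->
  cong f g -> cong f' g'.
Proof. move=> ff gg; apply: IG_ext => x; by rewrite ff gg. Qed.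

Lemma cong_trans (f g h : P) : cong f g -> cong g h -> cong f h.
Proof. move=> H1 H2; apply: IG_ext (IG_add H1 H2) => x; rg. Qed.

Lemma cong_sym (f g : P) : cong f g -> cong g f.
Proof. move=> H; apply: IG_ext (IG_scale (-1) H) => x; rg. Qed.

Lemma cong_add (f g f' g' : P) : cong f g -> cong f' g' ->
  cong (fun x => f x + f' x) (fun x => g x + g' x).
Proof. move=> H1 H2; apply: IG_ext (IG_add H1 H2) => x; rg. Qed.

Lemma cong_mul (p f g : P) : is_poly p -> cong f g ->
  cong (fun x => p x * f x) (fun x => p x * g x).
Proof. move=> Hp H; apply: IG_ext (IG_mul Hp H) => x; rg. Qed.

Fixpoint alldeg k (gs : seq P) : Prop :=
  match gs with [::] => True | g :: gs => is_poly_deg k g /\ alldeg k gs end.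

Definition SOS k (h : P) := exists gs, alldeg k gs /\
  cong h (fun x => \sum_(g <- gs) g x ^+ 2).

Lemma SOS_cong k (h h' : P) : cong h h' -> SOS k h' -> SOS k h.
Proof. move=> H [gs [H1 H2]]; exists gs; split=> //; exact: cong_trans H H2. Qed.

Lemma SOS_ext k (h h' : P) : (forall x, h x = h' x) -> SOS k h' -> SOS k h.
Proof.
move=> H; apply: SOS_cong; apply: IG_ext IG0 => x; rewrite H; rg.
Qed.

Lemma alldeg_cat k (s t : seq P) : alldeg k s -> alldeg k t -> alldeg k (s ++ t).
Proof. by elim: s => //= g s IH [H1 H2] Ht; split=> //; apply: IH. Qed.

Lemma SOS_add k (h1 h2 : P) : SOS k h1 -> SOS k h2 -> SOS k (fun x => h1 x + h2 x).
Proof.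
move=> [g1 [H1 H2]] [g2 [H3 H4]]; exists (g1 ++ g2); split; first exact: alldeg_cat.
apply: cong_ext (cong_add H2 H4) => // x; by rewrite big_cat.
Qed.

Lemma SOS_nil k : SOS k (fun _ => 0).
Proof. exists [::]; split=> //; apply: IG_ext IG0 => x; rewrite big_nil; rg. Qed.

Lemma deg_sumsq k (gs : seq P) : alldeg k gs -> is_poly_deg (k + k) (fun x => \sum_(g <- gs) g x ^+ 2).
Proof.
elim: gs => [|g gs IH] /= => [_|[Hg Hgs]].
  by apply: (deg_ext (f := fun _ => 0)); [move=> x; rewrite big_nil | apply: deg_const].
apply: deg_ext (deg_add (deg_mul Hg Hg) (IH Hgs)) => x.
by rewrite big_cons expr2.
Qed.

Lemma SOS_idem k (t h : P) : is_poly_deg 1 t -> cong (fun x => t x ^+ 2) t ->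
  SOS k h -> SOS (1 + k) (fun x => t x * h x).
Proof.
move=> Ht Hid [gs [H1 H2]].
exists [seq (fun x => t x * g x) | g <- gs]; split.
  elim: gs H1 {H2} => //= g gs IH [Hg Hgs]; split; [exact: deg_mul | exact: IH].
apply: cong_trans (cong_mul (poly_deg Ht) H2) _.
have Hs := poly_deg (deg_sumsq H1).
apply: cong_sym; apply: cong_ext (cong_mul Hs Hid) => x.
  by rewrite big_map mulr_suml; apply: eq_bigr => g _; rewrite exprMn mulrC.
by rewrite mulrC.
Qed.


Lemma deg_lin (a b : 'I_n) : is_poly_deg 1 (fun x : 'I_n -> R => 1 - x a - x b).
Proof.
apply: deg_ext (deg_add (deg_add (deg_const n 1 1) (deg_scale (-1) (deg_var R a (leqnn 1))))
  (deg_scale (-1) (deg_var R b (leqnn 1)))) => x; rg.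
Qed.

Lemma SOS_pair (a b : 'I_n) : e a b -> SOS 1 (fun x => 1 - x a - x b).
Proof.
move=> eab; exists [:: fun x => 1 - x a - x b]; split; first by split=> //; apply: deg_lin.
have H := IG_add (IG_add (IG_scale (-1) (IG_sq a)) (IG_scale (-1) (IG_sq b)))
  (IG_add (IG_scale (-1) (IG_edge eab)) (IG_scale (-1) (IG_edge eab))).
apply: IG_ext H => x; rewrite big_seq1; rg.
Qed.

Fixpoint paired (s : seq 'I_n) : bool :=
  match s with a :: b :: t => e a b && paired t | [::] => true | _ => false end.

Lemma SOS_paired (s : seq 'I_n) : paired s ->
  SOS 1 (fun x => ((size s)./2)%:R - \sum_(i <- s) x i).
Proof.
have [m] := ubnP (size s); elim: m s => // m IH [|a [|b t]] //= Hs.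
  move=> _; eapply SOS_ext; last apply: SOS_nil.
  by move=> x; rewrite big_nil mulr0n; rg.
move=> /andP [eab pt].
have Ht : (size t < m)%N by exact: ltn_trans (ltnSn _) Hs.
apply: SOS_ext (SOS_add (SOS_pair eab) (IH t Ht pt)) => x.
rewrite !big_cons mulrS; set S := \sum_(i <- t) x i; set K := (size t)./2%:R; rg.
Qed.

Lemma path_paired (s : seq 'I_n) (a : 'I_n) : path e a s -> ~~ odd (size s) -> paired s.
Proof.
have [m] := ubnP (size s); elim: m s a => // m IH [|b [|c t]] //= a Hs.
move=> /and3P [_ ebc pt]; rewrite negbK => ot; rewrite ebc /=.
apply: (IH t c) => //; first exact: ltn_trans (ltnSn _) Hs.
Qed.

Lemma alldeg_nth k (gs : seq P) (d : P) (i : nat) : alldeg k gs -> is_poly_deg k d ->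
  is_poly_deg k (nth d gs i).
Proof.
elim: gs i => [|g gs IH] /= i H Hd; first by rewrite nth_nil.
case: H => Hg Hgs; case: i => [|i] //=; exact: IH.
Qed.

Lemma SOS_sos (h : P) : SOS 2 h -> sos_mod 2 e h.
Proof.
move=> [gs [H1 H2]].
pose d0 : P := fun _ => 0.
exists (size gs), (fun l => @nth P d0 gs l); split.
  move=> l; apply: alldeg_nth H1 _; exact: deg_const.
apply: IG_ext H2 => x; congr (_ - _).
by rewrite (big_nth d0) big_mkord.
Qed.


Lemma cong_idem (t : 'I_n) : cong (fun x => x t ^+ 2) (fun x => x t).
Proof. apply: IG_ext (IG_sq t) => x; rg. Qed.

Lemma cong_idem' (t : 'I_n) : cong (fun x => (1 - x t) ^+ 2) (fun x => 1 - x t).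
Proof. apply: IG_ext (IG_sq t) => x; rg. Qed.

Lemma main_sos (c : seq 'I_n) : graph_cycle e c -> odd (size c) ->
  SOS 2 (fun x => ((size c).-1)%:R / 2 - \sum_(i <- c) x i).
Proof.
case=> Hs _ Hcyc Hodd.
case: c Hs Hcyc Hodd => [|c0 [|c1 t]] // Hs Hcyc Hodd.
case/lastP: t Hs Hcyc Hodd => [|mid cl] // Hs Hcyc Hodd.
move: Hcyc; rewrite /cycle rcons_path /= last_rcons => /andP [/andP [e01 Hp] elast].
have Hpm : path e c1 mid by move: Hp; rewrite rcons_path => /andP [].
move: Hodd; rewrite /= size_rcons /= negbK => Hodd.
have Pmid : paired mid by apply: (path_paired Hpm); rewrite Hodd.
have P2 : paired (c1 :: rcons mid cl).
  apply: (path_paired (a := c0)); first by rewrite /= e01.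
  by rewrite /= size_rcons /= negbK.
have S1 := SOS_idem (deg_var R c0 (leqnn 1)) (cong_idem c0) (SOS_paired Pmid).
have D1 : is_poly_deg 1 (fun x : 'I_n -> R => 1 - x c0).
  by apply: deg_ext (deg_add (deg_lin c0 c0) (deg_var R c0 (leqnn 1))) => x; rg.
have S2 := SOS_idem D1 (cong_idem' c0) (SOS_paired P2).
apply: SOS_cong (SOS_add S1 S2).
set kk := (size mid)./2.
have Hk : (size mid = kk.*2)%N by rewrite -[LHS]odd_double_half (negbTE Hodd).
have H2 : ((size mid).+2)%:R / 2 = kk%:R + 1 :> R.
  rewrite Hk -doubleS -muln2 natrM mulfK; last by rewrite pnatr_eq0.
  by rewrite -addn1 natrD.
have H3 : (size (c1 :: rcons mid cl))./2 = kk.+1 by rewrite /= size_rcons Hk /= doubleK.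
have H := IG_add (IG_scale (-1) (IG_edge e01)) (IG_scale (-1) (IG_edge elast)).
apply: IG_ext H => x.
rewrite H2 H3 !big_cons big_rcons /= mulrS.
set S := \sum_(i <- mid) x i; set K := kk%:R; rg.
Qed.

End Ideal.

Theorem mainTheorem7 (R : realFieldType) (n : nat) (e : rel 'I_n)
    (e_sym : symmetric e) (e_irr : irreflexive e) (c : seq 'I_n)
    (hc : graph_cycle e c) (hodd : odd (size c)) :
  sos_mod 2 e (fun x : 'I_n -> R => ((size c).-1)%:R / 2 - \sum_(i <- c) x i) /\
  (forall p : 'I_n -> R, TH 2 e p -> \sum_(i <- c) p i <= ((size c).-1)%:R / 2).
Proof.
have Hs := SOS_sos (@main_sos R n e c hc hodd).
split=> // p Hp.
have Hd : is_poly_deg 1 (fun x : 'I_n -> R => ((size c).-1)%:R / 2 - \sum_(i <- c) x i).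
  have Hv : forall i : 'I_n, is_poly_deg 1 (fun x : 'I_n -> R => x i).
    by move=> i; apply: deg_var.
  have Hsum : is_poly_deg 1 (fun x : 'I_n -> R => \sum_(i <- c) x i).
    by apply: deg_ext (deg_sum c Hv).
  have Hc : is_poly_deg 1 (fun _ : 'I_n -> R => ((size c).-1)%:R / 2 : R) by apply: deg_const.
  apply: deg_ext (deg_add Hc (deg_scale (-1) Hsum)) => x /=.
  by rewrite mulN1r.
by have := Hp _ Hd Hs; rewrite subr_ge0.
Qed.
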